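(* Let $p$ be a prime and let $a,b,c$ be positive integers with $b>1$, $c\mid p^a-1$, $c$ a primitive divisor of $p^a-1$, and $p-1\mid c$. Put $m=ab$, $n=bc$, $u=\frac{p^a-1}{c}$, assume $n$ is a primitive divisor of $p^m-1$, and put $k=\frac{p^m-1}{n}$. Then for each $\beta\in\mathbb{F}_{p^m}$ there exist $\alpha_1,\dots,\alpha_b\in\mathbb{F}_{p^a}$ such that $$\#C_{k,\beta}(\mathbb{F}_{p^m})=\tfrac1b\Psi_b(p^a)\sum_{i=1}^b\#C_{u,\alpha_i}(\mathbb{F}_{p^a})-(p+1)p^a\Psi_{b-1}(p^a).\qquad(\ast)$$ Conversely, for any $\alpha_1,\dots,\alpha_b\in\mathbb{F}_{p^a}$ there exists $\beta\in\mathbb{F}_{p^m}$ satisfying $(\ast)$.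
   Context: $\Psi_b(x)=x^{b-1}+\cdots+x+1$. For a prime power $Q=p^M$, an integer $k$ and $\beta\in\mathbb{F}_Q$, $C_{k,\beta}$ is the Artin–Schreier curve $y^p-y=\beta x^k$, and $\#C_{k,\beta}(\mathbb{F}_Q):=1+\#\{(x,y)\in\mathbb{F}_Q^2: y^p-y=\beta x^k\}$. A positive integer $d$ is a primitive divisor of $p^M-1$ if $d\mid p^M-1$ and $d\nmid p^t-1$ for all $1\le t<M$. *)

(* Defs.v *)
From HB Require Import structures.
From mathcomp Require Import all_boot all_order all_algebra all_field.
Set Implicit Arguments. Unset Strict Implicit. Unset Printing Implicit Defensive.
Import GRing.Theory.

Definition Psi (b x : nat) : nat := \sum_(i < b) x ^ i.

Definition primitive_divisor (d p M : nat) : Prop :=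
  (d %| p ^ M - 1)%N /\ (forall t : nat, (1 <= t)%N -> (t < M)%N -> ~~ (d %| p ^ t - 1)%N).

(* #C_{k,beta}(F) = 1 + #{(x,y) in F^2 : y^p - y = beta x^k}, where p is the
   characteristic of F passed explicitly. *)
Definition nbC (F : finFieldType) (p k : nat) (beta : F) : nat :=
  (1 + #|[set xy : F * F | (xy.2 ^+ p - xy.2 == beta * xy.1 ^+ k)%R]|)%N.

(* Main.v *)
From HB Require Import structures.
From mathcomp Require Import all_boot all_order all_algebra all_field.
From mathcomp Require Import cyclic.
From mathcomp Require Import zify ring.
Require Import Defs.
Import GRing.Theory.
Local Open Scope ring_scope.

Section Fib.
Variables (A B : finZmodType) (f : A -> B).
Hypothesis fB : forall x y, f (x - y) = f x - f y.

Lemma fib0 : f 0 = 0.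
Proof. by rewrite -(subrr 0) fB subrr. Qed.

Lemma fibN x : f (- x) = - f x.
Proof. by rewrite -sub0r fB fib0 sub0r. Qed.

Lemma fibD x y : f (x + y) = f x + f y.
Proof. by have := fB x (- y); rewrite opprK fibN opprK. Qed.

Lemma fib_card t : #|[set x | f x == t]| =
  if t \in [set f x | x : A] then #|[set x | f x == 0]| else 0%N.
Proof.
case: imsetP => [[x0 _ ->]|nt].
  have -> : [set x | f x == f x0] = [set y + x0 | y in [set y | f y == 0]].
    apply/setP => x; rewrite inE; apply/eqP/imsetP.
      move=> e; exists (x - x0); last by rewrite subrK.
      by rewrite inE fB e subrr.
    by move=> [y]; rewrite inE => /eqP Hy ->; rewrite fibD Hy add0r.
  by rewrite card_imset //; apply: addIr.
apply/eqP; rewrite cards_eq0; apply/eqP/setP => x; rewrite !inE.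
by apply/negbTE/eqP => e; apply: nt; exists x.
Qed.

Lemma fib_sum (P : pred B) : #|[set x | P (f x)]| =
  (#|[set x | f x == 0%R]| * #|[set t | P t && (t \in [set f x | x : A])]|)%N.
Proof.
rewrite -sum1_card (partition_big f P) //=.
rewrite (eq_bigr (fun t => #|[set x | f x == t]|)); last first.
  move=> t Pt; rewrite -sum1_card; apply: eq_bigl => x.
  rewrite !inE; case: eqP => [->|]; by rewrite ?Pt ?andbF.
rewrite (eq_bigr _ (fun t _ => fib_card t)) -big_mkcondr /=.
rewrite sum_nat_const mulnC; congr (_ * _)%N.
  by apply: eq_card => t; rewrite inE.
by move=> i; rewrite inE. Qed.

Lemma fib_total : #|A| = (#|[set x | f x == 0%R]| * #|[set f x | x : A]|)%N.
Proof.
have H := fib_sum predT.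
have E1 : [set x | predT (f x)] = setT by apply/setP => x; rewrite !inE.
rewrite E1 cardsT in H; rewrite H; congr (_ * _)%N.
by apply: eq_card => t; rewrite !inE.
Qed.
End Fib.
Section Gen.
Variables (F : finFieldType) (p : nat).
Hypothesis pc : p \in [pchar F].

Lemma p_prime : prime p. Proof. exact: pcharf_prime pc. Qed.
Lemma p_gt1 : (1 < p)%N. Proof. exact: prime_gt1 p_prime. Qed.

Lemma frobD1 (x y : F) : (x + y) ^+ p = x ^+ p + y ^+ p.
Proof. by rewrite -!(pFrobenius_autE pc) rmorphD. Qed.
Lemma frobN1 (x : F) : (- x) ^+ p = - x ^+ p.
Proof. by rewrite -!(pFrobenius_autE pc) rmorphN. Qed.
Lemma frobB1 (x y : F) : (x - y) ^+ p = x ^+ p - y ^+ p.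
Proof. by rewrite frobD1 frobN1. Qed.

Lemma frobD e (x y : F) : (x + y) ^+ (p ^ e) = x ^+ (p ^ e) + y ^+ (p ^ e).
Proof.
elim: e => [|e IH]; first by rewrite expn0 !expr1.
by rewrite expnSr !exprM IH frobD1.
Qed.
Lemma frobN e (x : F) : (- x) ^+ (p ^ e) = - x ^+ (p ^ e).
Proof.
elim: e => [|e IH]; first by rewrite expn0 !expr1.
by rewrite expnSr !exprM IH frobN1.
Qed.
Lemma frobB e (x y : F) : (x - y) ^+ (p ^ e) = x ^+ (p ^ e) - y ^+ (p ^ e).
Proof. by rewrite frobD frobN. Qed.

Lemma frob_sum e (I : Type) (r : seq I) (P : pred I) (G : I -> F) :
  (\sum_(i <- r | P i) G i) ^+ (p ^ e) = \sum_(i <- r | P i) G i ^+ (p ^ e).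
Proof.
apply: (big_morph (fun x : F => x ^+ (p ^ e))); first exact: frobD.
have p0 := prime_gt0 p_prime. by rewrite expr0n expn_eq0 gtn_eqF.
Qed.

Definition Wp := [set y ^+ p - y | y : F].

Lemma fp_fB (x y : F) : (x - y) ^+ p - (x - y) = (x ^+ p - x) - (y ^+ p - y).
Proof. rewrite frobB1; ring. Qed.

Lemma ker_p : #|[set y : F | y ^+ p - y == 0]| = p.
Proof.
have p1 := p_gt1.
apply/eqP; rewrite eqn_leq; apply/andP; split.
  set P : {poly F} := 'X^p - 'X.
  have szP : size P = p.+1.
    rewrite /P size_addl ?size_polyXn // size_opp size_polyX //.
  have P0 : P != 0 by rewrite -size_poly_eq0 szP.
  have := @max_poly_roots _ P (enum [set y : F | y ^+ p - y == 0]) P0.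
  rewrite enum_uniq szP -cardE ltnS; apply.
  apply/allP => y; rewrite mem_enum inE /root /P !hornerE.
  by [].
  by [].
have Hc : #|([set (nat_of_ord i)%:R | i : 'I_p] : {set F})| = p.
  rewrite card_imset ?card_ord // => i j /= e.
  apply/val_inj => /=.
  have key : forall i j : nat, (i <= j)%N -> (j < p)%N -> i%:R = j%:R :> F -> i = j.
    move=> i0 j0 ij jp e0.
    have : (p %| j0 - i0)%N by rewrite (dvdn_pcharf pc) natrB // e0 subrr.
    case H : (j0 - i0)%N => [|d]; first lia.
    move/dvdn_leq => /(_ isT); lia.
  case: (leqP i j) => ij; first by apply: key.
  by apply/esym/key => //; apply: ltnW.
rewrite -[X in (X <= _)%N]Hc.
apply/subset_leq_card/subsetP => y /imsetP [i _ ->].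
by rewrite inE -(pFrobenius_autE pc) pFrobenius_aut_nat subrr.
Qed.

Lemma fibp t : #|[set y : F | y ^+ p - y == t]| = if t \in Wp then p else 0%N.
Proof. by rewrite (@fib_card _ _ (fun y : F => y ^+ p - y) fp_fB) ker_p. Qed.

Lemma cardW : #|F| = (p * #|Wp|)%N.
Proof. by rewrite (@fib_total _ _ (fun y : F => y ^+ p - y) fp_fB) ker_p. Qed.

Lemma W0 : 0 \in Wp.
Proof. by apply/imsetP; exists 0 => //; rewrite expr0n gtn_eqF ?prime_gt0 ?p_prime // subrr. Qed.


Lemma prim_char n (z : F) : (0 < n)%N -> (forall i, (n %| i)%N = (z ^+ i == 1)) ->
  n.-primitive_root z.
Proof.
move=> n0 H; apply/andP; split => //; apply/forallP => i.
rewrite unity_rootE -H; apply/eqP; apply/idP/idP.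
  by move=> /dvdn_leq => /(_ isT) => h; apply/eqP; have := ltn_ord i; lia.
by move/eqP => ->.
Qed.

Lemma prim_exists : exists w : F, (#|F|.-1).-primitive_root w.
Proof.
have F1 : (1 < #|F|)%N := finNzRing_gt1 F.
have H : has (#|F|.-1).-primitive_root (enum [set x : F | x != 0]).
apply: has_prim_root; first by lia.
- apply/allP => x; rewrite mem_enum inE => x0.
  rewrite unity_rootE; apply/eqP; apply: (mulIf x0); rewrite mul1r -exprSr.
  by rewrite prednK ?expf_card //; lia.
- exact: enum_uniq.
- rewrite -cardE.
  have -> : [set x : F | x != 0] = [set~ 0] by apply/setP => x; rewrite !inE.
  by rewrite cardsC1.
by case/hasP: H => w _ Hw; exists w.
Qed.

Lemma sum_field N (w : F) (G : F -> nat) : #|F| = N.+1 -> N.-primitive_root w ->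
  (\sum_(x : F) G x = G 0%R + \sum_(i < N) G (w ^+ i))%N.
Proof.
move=> hF pw; rewrite (bigD1 0) //=; congr (_ + _)%N.
have -> : (\sum_(x | x != 0%R) G x = \sum_(x in [set w ^+ i | i : 'I_N]) G x)%N.
  apply: eq_bigl => x; apply/idP/imsetP.
    move=> x0; have := @prim_rootP _ _ _ pw x.
    case.
      apply: (mulIf x0); rewrite mul1r -exprSr -hF; exact: expf_card.
    by move=> i ->; exists i.
  case=> i _ ->; rewrite expf_neq0 // (prim_root_eq0 pw).
  by have := finNzRing_gt1 F; rewrite hF; lia.
rewrite big_imset /=; last first.
  move=> i j _ _ /eqP; rewrite (eq_prim_root_expr pw) !modn_small //.
  by move/eqP/val_inj.
by apply: eq_bigl => i; rewrite inE.
Qed.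

Lemma prim_count n (z : F) (P : pred F) : n.-primitive_root z ->
  #|[set x | (x ^+ n == 1) && P x]| = (\sum_(j < n) P (z ^+ j))%N.
Proof.
move=> pz.
have -> : (\sum_(j < n) P (z ^+ j))%N = #|[set j : 'I_n | P (z ^+ j)]|.
  rewrite -sum1_card [RHS]big_mkcond /=; apply: eq_bigr => j _.
  by rewrite inE; case: (P _).
rewrite -(@card_imset _ _ (fun j : 'I_n => z ^+ j)); last first.
  move=> i j /eqP; rewrite (eq_prim_root_expr pz) !modn_small //.
  by move/eqP/val_inj.
apply: eq_card => x; rewrite inE; apply/andP/imsetP.
  case=> /eqP xn Px; have [i xi] := prim_rootP pz xn.
  by exists i => //; rewrite inE -xi.
case=> i; rewrite inE => Pi ->; split => //.
by rewrite exprAC (prim_expr_order pz) expr1n.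
Qed.

Lemma period n k (z : F) (G : F -> nat) : z ^+ n = 1 ->
  (\sum_(i < k * n) G (z ^+ i) = k * \sum_(j < n) G (z ^+ j))%N.
Proof.
move=> zn; elim: k => [|k IH]; first by rewrite mul0n big_ord0.
rewrite mulSn big_split_ord /= mulSn -IH; congr (_ + _)%N.
by apply: eq_bigr => i _; rewrite /= exprD zn mul1r.
Qed.

Definition Aset n (beta : F) := [set z : F | (z ^+ n == 1) && (beta * z \in Wp)].

Lemma nbC_formula k n (beta : F) : #|F| = (k * n).+1 -> (0 < k)%N -> (0 < n)%N ->
  nbC p k beta = (1 + p + k * p * #|Aset n beta|)%N.
Proof.
move=> hF k0 n0; rewrite /nbC -addnA; congr (1 + _)%N.
have -> : #|[set xy : F * F | xy.2 ^+ p - xy.2 == beta * xy.1 ^+ k]| =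
   (\sum_(x : F) #|[set y : F | (y ^+ p - y == beta * x ^+ k)%R]|)%N.
  rewrite -sum1_card.
  rewrite (eq_bigr (fun x : F => \sum_(y in [set y : F | (y ^+ p - y == beta * x ^+ k)%R]) 1)%N);
    last by move=> x _; rewrite sum1_card.
  rewrite pair_big_dep /=; apply: eq_bigl => xy; by rewrite !inE.
under eq_bigr do rewrite fibp.
have [w pw] := prim_exists.
rewrite hF /= in pw.
rewrite (@sum_field _ _ _ hF pw) /=.
rewrite expr0n gtn_eqF // mulr0 W0 //; congr (_ + _)%N.
set z := w ^+ k.
have pz : n.-primitive_root z by have := dvdn_prim_root pw (dvdn_mull k (dvdnn n)); rewrite mulnK.
rewrite (eq_bigr (fun i : 'I_(k * n) => if beta * z ^+ i \in Wp then p else 0%N)); last first.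
  by move=> i _; rewrite /z -!exprM mulnC.
rewrite (@period n k z (fun y => if beta * y \in Wp then p else 0%N) (prim_expr_order pz)).
rewrite (@prim_count n z (fun y => beta * y \in Wp) pz) -mulnA; congr (_ * _)%N.
rewrite big_distrr /=; apply: eq_bigr => i _; by case: (_ \in _); rewrite ?muln1 ?muln0.
Qed.

End Gen.

Lemma card_roots_le (F : finFieldType) (P : {poly F}) : P != 0 ->
  (#|[set y : F | root P y]| < size P)%N.
Proof.
move=> P0; have := @max_poly_roots _ P (enum [set y : F | root P y]) P0.
rewrite enum_uniq -cardE; apply.
by apply/allP => y; rewrite mem_enum inE. by [].
Qed.

Lemma card_fix_le (F : finFieldType) N : (1 < N)%N ->
  (#|[set y : F | y ^+ N == y]| <= N)%N.
Proof.
move=> N1; set P : {poly F} := 'X^N - 'X.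
have szP : size P = N.+1 by rewrite /P size_addl ?size_polyXn // size_opp size_polyX.
have P0 : P != 0 by rewrite -size_poly_eq0 szP.
have := @card_roots_le _ _ P0; rewrite szP ltnS.
apply: leq_trans; apply: subset_leq_card; apply/subsetP => y.
by rewrite !inE /root /P !hornerE subr_eq0.
Qed.

Section Embed.
Variables (A M : finFieldType) (p : nat).
Variables (iA : {rmorphism 'F_p -> A}) (iM : {rmorphism 'F_p -> M}).
Variables (g : A) (f0 : {poly 'F_p}).
Hypothesis pg : (#|A|.-1).-primitive_root g.
Hypothesis Hdiv : forall h, root (map_poly iA h) g -> f0 %| h.
Hypothesis Hf0 : root (map_poly iA f0) g.
Hypothesis Hf0nz : f0 != 0.
Hypothesis hAM : forall x : A, x ^+ #|M| = x.

Lemma root_exists : exists r : M, root (map_poly iM f0) r.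
Proof.
have H : f0 %| 'X^#|M| - 'X.
  apply: Hdiv; rewrite rmorphB /= map_polyXn map_polyX.
  by rewrite /root !hornerE hAM subrr.
rewrite -(dvdp_map iM) rmorphB /= map_polyXn map_polyX finField_genPoly in H.
have [m Hm] := dvdp_prod_XsubC H.
have sz : (1 < size (map_poly iM f0))%N.
  rewrite size_map_poly -(size_map_poly iA).
  by apply: root_size_gt1 Hf0; rewrite map_poly_eq0.
move: sz; rewrite (eqp_size Hm) size_prod_XsubC.
case E : (mask m (index_enum M)) => [|x s] //= _.
exists x; rewrite (eqp_root Hm) E root_prod_XsubC.
by rewrite mem_head.
Qed.
End Embed.

Section Phi.
Variables (A M : finFieldType) (p : nat).
Variables (iA : {rmorphism 'F_p -> A}) (iM : {rmorphism 'F_p -> M}).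
Variables (g : A) (f0 : {poly 'F_p}).
Hypothesis pg : (#|A|.-1).-primitive_root g.
Hypothesis Hdiv : forall h, root (map_poly iA h) g -> f0 %| h.
Variable r : M.
Hypothesis Hr : root (map_poly iM f0) r.

Definition evA h := (map_poly iA h).[g].
Definition evM h := (map_poly iM h).[r].

Lemma evAD h1 h2 : evA (h1 + h2) = evA h1 + evA h2.
Proof. by rewrite /evA rmorphD hornerD. Qed.
Lemma evAB h1 h2 : evA (h1 - h2) = evA h1 - evA h2.
Proof. by rewrite /evA rmorphB hornerD hornerN. Qed.
Lemma evAM h1 h2 : evA (h1 * h2) = evA h1 * evA h2.
Proof. by rewrite /evA rmorphM hornerM. Qed.
Lemma evA1 : evA 1 = 1.
Proof. by rewrite /evA rmorph1 hornerC. Qed.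
Lemma evMD h1 h2 : evM (h1 + h2) = evM h1 + evM h2.
Proof. by rewrite /evM rmorphD hornerD. Qed.
Lemma evMB h1 h2 : evM (h1 - h2) = evM h1 - evM h2.
Proof. by rewrite /evM rmorphB hornerD hornerN. Qed.
Lemma evMM h1 h2 : evM (h1 * h2) = evM h1 * evM h2.
Proof. by rewrite /evM rmorphM hornerM. Qed.
Lemma evM1 : evM 1 = 1.
Proof. by rewrite /evM rmorph1 hornerC. Qed.

Definition hx (x : A) : {poly 'F_p} :=
  if [pick i : 'I_(#|A|.-1) | g ^+ i == x] is Some i then 'X^i else 0.
Definition phi (x : A) : M := evM (hx x).

Lemma evA_hx x : evA (hx x) = x.
Proof.
rewrite /hx; case: pickP => [i /eqP <-|H]; first by rewrite /evA map_polyXn hornerXn.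
case: (eqVneq x 0) => [->|x0]; first by rewrite /evA rmorph0 horner0.
have A0 : (0 < #|A|)%N by apply/card_gt0P; exists 0.
have xN : x ^+ #|A|.-1 = 1.
  by apply: (mulIf x0); rewrite mul1r -exprSr prednK // expf_card.
have [i Hi] := prim_rootP pg xN.
by move: (H i); rewrite Hi eqxx.
Qed.

Lemma evM_zero h : evA h = 0 -> evM h = 0.
Proof.
move=> e; have /dvdpP [q ->] : f0 %| h by apply: Hdiv; rewrite /root -/(evA h) e.
by rewrite /evM rmorphM hornerM (rootP Hr) mulr0.
Qed.

Lemma phiE h : phi (evA h) = evM h.
Proof.
rewrite /phi; apply/eqP; rewrite -subr_eq0 -evMB; apply/eqP/evM_zero.
by rewrite evAB evA_hx subrr.
Qed.

Lemma phiD x y : phi (x + y) = phi x + phi y.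
Proof. by rewrite -{1}(evA_hx x) -{1}(evA_hx y) -evAD phiE evMD. Qed.
Lemma phiM x y : phi (x * y) = phi x * phi y.
Proof. by rewrite -{1}(evA_hx x) -{1}(evA_hx y) -evAM phiE evMM. Qed.
Lemma phiB x y : phi (x - y) = phi x - phi y.
Proof. by rewrite -{1}(evA_hx x) -{1}(evA_hx y) -evAB phiE evMB. Qed.
Lemma phi1 : phi 1 = 1.
Proof. by rewrite -evA1 phiE evM1. Qed.
Lemma phi0 : phi 0 = 0.
Proof. by rewrite -(subrr 0) phiB subrr. Qed.
Lemma phiX x n : phi (x ^+ n) = phi x ^+ n.
Proof. by elim: n => [|n IH]; rewrite ?expr0 ?phi1 // !exprS phiM IH. Qed.
Lemma phi_sum (I : Type) (s : seq I) (P : pred I) (G : I -> A) :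
  phi (\sum_(i <- s | P i) G i) = \sum_(i <- s | P i) phi (G i).
Proof. exact: (big_morph phi phiD phi0). Qed.

Lemma phi_inj : injective phi.
Proof.
move=> x y e; apply/eqP; rewrite -subr_eq0; apply/eqP.
case: (eqVneq (x - y) 0) => // d0.
have : phi ((x - y)^-1) * phi (x - y) = 1 by rewrite -phiM mulVf // phi1.
by rewrite phiB e subrr mulr0 => /esym/eqP; rewrite oner_eq0.
Qed.

Lemma phi_onto (y : M) : y ^+ #|A| = y -> exists x, phi x = y.
Proof.
have A1 : (1 < #|A|)%N := finNzRing_gt1 A.
set K := [set y : M | y ^+ #|A| == y].
have sub : [set phi x | x : A] \subset K.
  by apply/subsetP => _ /imsetP [x _ ->]; rewrite inE -phiX expf_card.
have c1 : #|[set phi x | x : A]| = #|A| by rewrite card_imset //; exact: phi_inj.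
have c2 := @card_fix_le M #|A| A1.
have E : [set phi x | x : A] = K by apply/eqP; rewrite eqEcard sub c1 c2.
move=> hy; have : y \in K by rewrite inE hy.
by rewrite -E => /imsetP [x _ ->]; exists x.
Qed.

Definition psi (y : M) : A := odflt 0 [pick x | phi x == y].

Lemma psi_phi x : psi (phi x) = x.
Proof.
rewrite /psi; case: pickP => [x' /eqP /phi_inj -> //|H].
by move: (H x); rewrite eqxx.
Qed.

Lemma phi_psi y : y ^+ #|A| = y -> phi (psi y) = y.
Proof. by move=> /phi_onto [x <-]; rewrite psi_phi. Qed.

End Phi.

Lemma embed_exists (A M : finFieldType) (p : nat) (pa : p \in [pchar A]) (pm : p \in [pchar M])
  (hAM : forall x : A, x ^+ #|M| = x) :
  exists phi : A -> M,
    [/\ (forall x y, phi (x + y) = phi x + phi y),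
        (forall x y, phi (x * y) = phi x * phi y), phi 1 = 1, injective phi &
        (forall y, y ^+ #|A| = y -> exists x, phi x = y)].
Proof.
pose AA := pPrimeCharType pa; pose MM := pPrimeCharType pm.
have [g pg] := @prim_exists AA p pa.
have /polyOver1P [f0 Hf0e] := minPolyOver 1 (g : AA).
have Hdiv : forall h, root (map_poly (in_alg AA) h) g -> f0 %| h.
  move=> h rh; rewrite -(dvdp_map (in_alg AA)) -Hf0e.
  apply: minPoly_dvdp => //; apply/polyOver1P; by exists h.
have Hf0 : root (map_poly (in_alg AA) f0) g by rewrite -Hf0e root_minPoly.
have Hf0nz : f0 != 0.
  by rewrite -(map_poly_eq0 (in_alg AA)) -Hf0e monic_neq0 ?monic_minPoly.
have hAM' : forall x : AA, x ^+ #|MM| = x by exact: hAM.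
have [r Hr] := @root_exists AA MM p (in_alg AA) (in_alg MM) g f0 Hdiv Hf0 Hf0nz hAM'.
exists (@phi AA MM p (in_alg MM) g r); split.
- exact: (@phiD AA MM p (in_alg AA) (in_alg MM) g f0 pg Hdiv r Hr).
- exact: (@phiM AA MM p (in_alg AA) (in_alg MM) g f0 pg Hdiv r Hr).
- exact: (@phi1 AA MM p (in_alg AA) (in_alg MM) g f0 pg Hdiv r Hr).
- exact: (@phi_inj AA MM p (in_alg AA) (in_alg MM) g f0 pg Hdiv r Hr).
- exact: (@phi_onto AA MM p (in_alg AA) (in_alg MM) g f0 pg Hdiv r Hr).
Qed.

Lemma sum_split c b (h : nat -> nat) :
  (\sum_(j < c * b) h j = \sum_(t < c) \sum_(s < b) h (t * b + s))%N.
Proof.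
elim: c => [|c IH]; first by rewrite mul0n !big_ord0.
by rewrite mulSnr big_split_ord IH big_ord_recr.
Qed.

Section Main.
Variables (A M : finFieldType) (p a b c : nat).
Hypothesis pa : p \in [pchar A].
Hypothesis pm : p \in [pchar M].
Hypothesis ha : (0 < a)%N.
Hypothesis hb : (1 < b)%N.
Hypothesis hc : (0 < c)%N.
Hypothesis hA : #|A| = (p ^ a)%N.
Hypothesis hM : #|M| = ((p ^ a) ^ b)%N.
Hypothesis hcd : (c %| p ^ a - 1)%N.
Hypothesis hn : primitive_divisor (b * c) p (a * b).
Variable phi : A -> M.
Hypothesis phiD : forall x y, phi (x + y) = phi x + phi y.
Hypothesis phiM : forall x y, phi (x * y) = phi x * phi y.
Hypothesis phi1 : phi 1 = 1.
Hypothesis phi_inj : injective phi.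
Hypothesis phi_onto : forall y, y ^+ #|A| = y -> exists x, phi x = y.

Local Notation Q := (p ^ a)%N.

Lemma pp : prime p. Proof. exact: pcharf_prime pa. Qed.
Lemma Q1 : (1 < Q)%N.
Proof. by rewrite -{1}(expn0 p) ltn_exp2l ?prime_gt1 ?pp. Qed.

Lemma Phi0 : phi 0 = 0.
Proof. by apply: (addIr (phi 0)); rewrite -phiD !add0r. Qed.
Lemma PhiN x : phi (- x) = - phi x.
Proof. by apply: (addIr (phi x)); rewrite -phiD !addNr Phi0. Qed.
Lemma PhiB x y : phi (x - y) = phi x - phi y.
Proof. by rewrite phiD PhiN. Qed.
Lemma PhiX x n : phi (x ^+ n) = phi x ^+ n.
Proof. by elim: n => [|n IH]; rewrite ?expr0 ?phi1 // !exprS phiM IH. Qed.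
Lemma Phi_eq0 x : (phi x == 0) = (x == 0).
Proof. by rewrite -Phi0; apply/eqP/eqP => [/phi_inj|->]. Qed.

Lemma fixQ (y : M) i : y ^+ Q = y -> y ^+ (Q ^ i) = y.
Proof.
move=> yQ; elim: i => [|i IH]; first by rewrite expn0 expr1.
by rewrite expnSr exprM IH.
Qed.

Lemma phiQ x i : phi x ^+ (Q ^ i) = phi x.
Proof. by apply: fixQ; rewrite -PhiX -hA expf_card. Qed.

Lemma QiE i : (Q ^ i = p ^ (a * i))%N. Proof. by rewrite expnM. Qed.

Definition Tr (y : M) := \sum_(i < b) y ^+ (Q ^ i).

Lemma TrD x y : Tr (x + y) = Tr x + Tr y.
Proof. by rewrite /Tr -big_split /=; apply: eq_bigr => i _; rewrite QiE (@frobD M p pm). Qed.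

Lemma TrZ x y : Tr (phi x * y) = phi x * Tr y.
Proof. by rewrite /Tr mulr_sumr; apply: eq_bigr => i _; rewrite exprMn phiQ. Qed.

Lemma TrP y : Tr (y ^+ p) = Tr y ^+ p.
Proof.
rewrite /Tr -(expn1 p) (@frob_sum M p pm); apply: eq_bigr => i _.
by rewrite -!exprM mulnC.
Qed.

Lemma TrK y : Tr y ^+ Q = Tr y.
Proof.
rewrite /Tr (@frob_sum M p pm).
have -> : \sum_(i < b) (y ^+ (Q ^ i)) ^+ (p ^ a) = \sum_(i < b) y ^+ (Q ^ i.+1).
  by apply: eq_bigr => i _; rewrite -exprM expnSr.
have hM' := hM; case: b hb hM' => [//|b'] _ hM'.
rewrite big_ord_recr big_ord_recl /= addrC; congr (_ + _).
by rewrite expn0 expr1 -hM' expf_card.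
Qed.

Definition psiM (y : M) : A := odflt 0 [pick x | phi x == y].
Lemma psiMphi x : psiM (phi x) = x.
Proof.
rewrite /psiM; case: pickP => [x' /eqP /phi_inj -> //|H].
by move: (H x); rewrite eqxx.
Qed.
Lemma phipsiM y : y ^+ Q = y -> phi (psiM y) = y.
Proof. by rewrite -hA => /phi_onto [x <-]; rewrite psiMphi. Qed.

Definition tau y := psiM (Tr y).
Lemma phi_tau y : phi (tau y) = Tr y.
Proof. by rewrite phipsiM // TrK. Qed.

Lemma tauD x y : tau (x + y) = tau x + tau y.
Proof. by apply: phi_inj; rewrite phiD !phi_tau TrD. Qed.
Lemma TrN y : Tr (- y) = - Tr y.
Proof. by rewrite /Tr -sumrN; apply: eq_bigr => i _; rewrite QiE (@frobN M p pm). Qed.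

Lemma tauB x y : tau (x - y) = tau x - tau y.
Proof. by apply: phi_inj; rewrite PhiB !phi_tau TrD TrN. Qed.

Lemma tauZ x y : tau (phi x * y) = x * tau y.
Proof. by apply: phi_inj; rewrite phiM !phi_tau TrZ. Qed.

Lemma tauW z : tau (z ^+ p - z) = tau z ^+ p - tau z.
Proof. by apply: phi_inj; rewrite PhiB PhiX !phi_tau TrD TrN TrP. Qed.

Lemma tau_eq0 y : (tau y == 0) = (Tr y == 0).
Proof. by rewrite -Phi_eq0 phi_tau. Qed.

Lemma ker_tau_le : (#|[set y : M | (tau y == 0)%R]| <= Q ^ b.-1)%N.
Proof.
set TP : {poly M} := \sum_(i < b) 'X^(Q ^ i).
have Q1' := Q1.
have [b' eb] : exists b', b = b'.+1 by exists b.-1; lia.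
have szTP : size TP = (Q ^ b.-1).+1.
  rewrite /TP eb big_ord_recr /= addrC size_addl size_polyXn //.
  rewrite ltnS; apply: leq_trans (size_sum _ _ _) _.
  apply/bigmax_leqP => i _; rewrite size_polyXn ltn_exp2l //.
have TP0 : TP != 0 by rewrite -size_poly_eq0 szTP.
have := @card_roots_le M TP TP0; rewrite szTP ltnS; apply: leq_trans.
apply: subset_leq_card; apply/subsetP => y; rewrite !inE tau_eq0 /root /TP.
by rewrite horner_sum; under eq_bigr do rewrite hornerXn.
Qed.

Lemma Qb : (Q ^ b = Q ^ b.-1 * Q)%N.
Proof. by rewrite -expnSr prednK //; lia. Qed.

Lemma tau_im : [set tau y | y : M] = setT /\ #|[set y : M | (tau y == 0)%R]| = (Q ^ b.-1)%N.
Proof.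
have T := @fib_total M A tau tauB.
have hK := ker_tau_le.
have hI : (#|[set tau y | y : M]| <= Q)%N by rewrite -hA max_card.
rewrite hM Qb in T.
have X0 : (0 < Q ^ b.-1)%N by rewrite expn_gt0 ltnW // Q1.
have Q0 : (0 < Q)%N by rewrite ltnW // Q1.
move: T hK hI X0 Q0.
set K := #|[set y : M | (tau y == 0)%R]|; set I := #|[set tau y | y : M]|; set X := (Q ^ b.-1)%N.
move=> T hK hI X0 Q0.
have eI : I = Q by nia.
have eK : K = X by nia.
split => //; apply/eqP; rewrite eqEcard subsetT cardsT /= hA -/I eI //.
Qed.

Lemma tau_onto x : exists y, tau y = x.
Proof.
have [E _] := tau_im; have : x \in [set tau y | y : M] by rewrite E.
by case/imsetP => y _ ->; exists y.
Qed.

Lemma key_mem y : (y \in Wp M p) = (tau y \in Wp A p).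
Proof.
set S := [set y : M | tau y \in Wp A p].
have sub : Wp M p \subset S.
  apply/subsetP => _ /imsetP [z _ ->]; rewrite inE tauW; apply/imsetP.
  by exists (tau z).
have cS : #|S| = (Q ^ b.-1 * #|Wp A p|)%N.
  rewrite /S (@fib_sum M A tau tauB (fun t => t \in Wp A p)).
  have [E ->] := tau_im; congr (_ * _)%N; apply: eq_card => t.
  by rewrite !inE E inE andbT.
have cM := @cardW M p pm; have cA := @cardW A p pa.
have pS : #|Wp M p| = #|S|.
  have p0 : (0 < p)%N by rewrite prime_gt0 ?pp.
  apply/eqP; rewrite -(eqn_pmul2l p0) -cM cS mulnCA -cA hA hM Qb.
  by rewrite mulnC.
have E : Wp M p = S by apply/eqP; rewrite eqEcard sub pS leqnn.
by rewrite E inE.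
Qed.

Section Roots.
Variable w : M.
Hypothesis pw : (#|M|.-1).-primitive_root w.
Local Notation n := (b * c)%N.

Lemma n_dvd : (n %| #|M|.-1)%N.
Proof. by case: hn; rewrite hM -expnM subn1. Qed.

Definition zeta := w ^+ (#|M|.-1 %/ n).
Lemma pz : n.-primitive_root zeta.
Proof. exact: (@dvdn_prim_root M _ w pw n n_dvd). Qed.

Definition eta := zeta ^+ b.
Lemma pe : c.-primitive_root eta.
Proof. by have := dvdn_prim_root pz (dvdn_mull b (dvdnn c)); rewrite mulnK. Qed.

Lemma etaQ : eta ^+ Q = eta.
Proof.
have : eta ^+ (Q - 1) == 1 by rewrite -(prim_order_dvd pe).
move/eqP => e1; have Q1' := Q1.
by rewrite -{1}(subnK (ltnW Q1')) exprD e1 mul1r expr1.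
Qed.

Definition theta := psiM eta.
Lemma phi_theta : phi theta = eta.
Proof. exact: phipsiM etaQ. Qed.

Lemma pth : c.-primitive_root theta.
Proof.
apply: (@prim_char A p pa) => // i.
by rewrite (prim_order_dvd pe) -phi_theta -PhiX -phi1 (inj_eq phi_inj).
Qed.

Lemma count_main beta : #|Aset M p n beta| =
  (\sum_(s < b) #|Aset A p c (tau (beta * zeta ^+ s)%R)|)%N.
Proof.
rewrite /Aset (@prim_count M n zeta (fun z => beta * z \in Wp M p) pz) /=.
rewrite (mulnC b c) (sum_split c b (fun j => nat_of_bool (beta * zeta ^+ j \in Wp M p))).
rewrite exchange_big /=; apply: eq_bigr => s _.
rewrite (@prim_count A c theta (fun z => tau (beta * zeta ^+ s) * z \in Wp A p) pth) /=.
apply: eq_bigr => t _; congr (nat_of_bool _).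
rewrite key_mem exprD mulnC exprM -/eta -phi_theta -PhiX mulrCA tauZ mulrC //.
Qed.

Lemma frob_inj e (x y : M) : x ^+ (p ^ e) = y ^+ (p ^ e) -> x = y.
Proof.
move=> H; have : (x - y) ^+ (p ^ e) == 0 by rewrite (@frobB M p pm) H subrr.
by rewrite expf_eq0 => /andP [_]; rewrite subr_eq0 => /eqP.
Qed.

Lemma n_gt0 : (0 < n)%N.
Proof. by rewrite muln_gt0 hc andbT; apply: ltnW. Qed.

Lemma zeta_frob_inj i j : (i < b)%N -> (j < b)%N ->
  zeta ^+ (Q ^ i) = zeta ^+ (Q ^ j) -> i = j.
Proof.
wlog ij : i j / (i <= j)%N.
  move=> H ib jb e; case: (leqP i j) => h; first by apply: H.
  by apply/esym/H => //; apply: ltnW.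
move=> ib jb e.
have eZ : zeta ^+ (Q ^ (j - i)) = zeta.
  apply: (@frob_inj (a * i)); rewrite -QiE -(exprM zeta) -expnD subnK //.
case Hd : (j - i)%N => [|d]; first by lia.
rewrite Hd in eZ.
have z0 : zeta != 0 by rewrite (prim_root_eq0 pz) -lt0n n_gt0.
have Qd1 : (0 < Q ^ d.+1)%N by rewrite expn_gt0 ltnW // Q1.
have e1 : zeta ^+ (Q ^ d.+1 - 1) = 1.
  apply: (mulIf z0); rewrite mul1r -exprSr subn1 prednK //.
have := prim_order_dvd pz (Q ^ d.+1 - 1); rewrite e1 eqxx QiE => Hdv.
case: hn => _ /(_ (a * d.+1)%N) H.
have : ~~ (n %| p ^ (a * d.+1) - 1)%N.
  apply: H; first by rewrite muln_gt0 ha.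
  rewrite ltn_pmul2l //; lia.
by rewrite Hdv.
Qed.

Lemma LI (kap : nat -> A) : \sum_(s < b) phi (kap s) * zeta ^+ s = 0 ->
  forall s, (s < b)%N -> kap s = 0.
Proof.
move=> H.
set P : {poly M} := \poly_(i < b) phi (kap i).
suff P0 : P = 0.
  move=> s sb; have := congr1 (fun q : {poly M} => q`_s) P0.
  by rewrite /P coef_poly sb coef0 => /eqP; rewrite Phi_eq0 => /eqP.
apply/eqP; apply: contraT => Pnz.
set rs := [seq zeta ^+ (Q ^ j) | j <- iota 0 b].
have : (size rs < size P)%N.
  apply: max_poly_roots => //.
    apply/allP => _ /mapP [j _ ->]; rewrite /root /P horner_poly.
    have <- : (\sum_(i < b) phi (kap i) * zeta ^+ i) ^+ (Q ^ j) =
              \sum_(i < b) phi (kap i) * (zeta ^+ (Q ^ j)) ^+ i.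
      rewrite QiE (@frob_sum M p pm); apply: eq_bigr => i _.
      by rewrite exprMn -QiE phiQ exprAC.
    by rewrite H expr0n expn_eq0 gtn_eqF // ltnW // Q1.
  rewrite map_inj_in_uniq ?iota_uniq // => i j; rewrite !mem_iota /= !add0n.
  by move=> ib jb; apply: zeta_frob_inj.
rewrite size_map size_iota ltnNge.
by rewrite size_poly.
Qed.

Lemma s0 : (0 < b)%N. Proof. by apply: ltnW. Qed.

Lemma span y : exists lam : {ffun 'I_b -> A},
  y = \sum_(s < b) phi (lam s) * zeta ^+ s.
Proof.
pose Lam (lam : {ffun 'I_b -> A}) := \sum_(s < b) phi (lam s) * zeta ^+ s.
have Linj : injective Lam.
  move=> l1 l2 e; apply/ffunP => s.
  pose u0 : 'I_b := Ordinal s0.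
  pose kap (i : nat) := l1 (insubd u0 i) - l2 (insubd u0 i).
  have H : \sum_(s < b) phi (kap s) * zeta ^+ s = 0.
    rewrite /kap; under eq_bigr do rewrite valKd PhiB mulrBl.
    by rewrite sumrB; apply/eqP; rewrite subr_eq0; apply/eqP.
  have := @LI kap H _ (ltn_ord s); rewrite /kap valKd => /eqP; rewrite subr_eq0 => /eqP.
  done.
have : y \in codom Lam.
  apply: inj_card_onto => //.
  by rewrite card_ffun card_ord hA hM.
by case/codomP => lam ->; exists lam.
Qed.

Lemma tau0 : tau 0 = 0.
Proof. by rewrite -(subrr 0) tauB subrr. Qed.

Lemma tau_sum (I : Type) (r : seq I) (P : pred I) (G : I -> M) :
  tau (\sum_(i <- r | P i) G i) = \sum_(i <- r | P i) tau (G i).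
Proof. exact: (big_morph tau tauD tau0). Qed.

Lemma tv_inj beta : (forall s : 'I_b, tau (beta * zeta ^+ s) = 0) -> beta = 0.
Proof.
move=> H; apply/eqP; apply: contraT => b0.
have [y0 hy0] := tau_onto 1.
have [lam hl] := span (beta^-1 * y0).
have : tau (beta * (beta^-1 * y0)) = 0.
  rewrite hl mulr_sumr tau_sum big1 // => s _.
  by rewrite mulrCA tauZ H mulr0.
by rewrite mulrA mulfV // mul1r hy0 => /eqP; rewrite oner_eq0.
Qed.

Lemma converse (alpha : 'I_b -> A) :
  exists beta, forall s : 'I_b, tau (beta * zeta ^+ s) = alpha s.
Proof.
pose Tv (beta : M) : {ffun 'I_b -> A} := [ffun s : 'I_b => tau (beta * zeta ^+ s)].
have Tinj : injective Tv.
  move=> b1 b2 e; apply/eqP; rewrite -subr_eq0; apply/eqP; apply: tv_inj => s.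
  have := congr1 (fun f : {ffun 'I_b -> A} => f s) e; rewrite !ffunE => e'.
  by rewrite mulrBl tauB e' subrr.
have : finfun alpha \in codom Tv.
  apply: inj_card_onto => //.
  by rewrite card_ffun card_ord hA hM.
case/codomP => beta e; exists beta => s.
by have := congr1 (fun f : {ffun 'I_b -> A} => f s) e; rewrite !ffunE.
Qed.

Definition rhsQ u' (alpha : 'I_b -> A) : rat :=
  (Psi b Q)%:Q / b%:Q * (\sum_(i < b) (nbC p u' (alpha i))%:Q)
    - ((p + 1) * Q * Psi b.-1 Q)%N%:Q.

Lemma arith k' u' beta (alpha : 'I_b -> A) : (k' * n = #|M|.-1)%N -> (u' * c = Q - 1)%N ->
  #|Aset M p n beta| = (\sum_(s < b) #|Aset A p c (alpha s)|)%N ->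
  (nbC p k' beta)%:Q = rhsQ u' alpha.
Proof.
move=> hk hu hS.
have M1 : (1 < #|M|)%N := finNzRing_gt1 M.
have Q1' := Q1.
have k0 : (0 < k')%N by move: hk M1; case: k' => [|//]; rewrite mul0n; lia.
have u0 : (0 < u')%N by move: hu Q1'; case: u' => [|//]; rewrite mul0n; lia.
have eM : #|M| = (k' * n).+1 by rewrite hk prednK // ltnW.
have eA : #|A| = (u' * c).+1 by rewrite hu hA; lia.
rewrite (@nbC_formula M p pm k' n beta eM k0 n_gt0).
have NA : forall s, nbC p u' (alpha s) = (1 + p + u' * p * #|Aset A p c (alpha s)|)%N.
  by move=> s; rewrite (@nbC_formula A p pa u' c (alpha s) eA u0 hc).
set X := Psi b.-1 Q.
have PsiE : Psi b Q = (1 + Q * X)%N.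
  rewrite /X /Psi; case: b hb => [//|b'] _ /=.
  by rewrite big_ord_recl expn0 big_distrr /=; congr (_ + _)%N; apply: eq_bigr => i _; rewrite expnS.
have geo : forall e, (Psi e Q * (Q - 1) = Q ^ e - 1)%N.
  elim=> [|e IH]; first by rewrite /Psi big_ord0.
  rewrite /Psi big_ord_recr /= mulnDl -/(Psi e Q) IH expnS.
  have : (1 <= Q ^ e)%N by rewrite expn_gt0 ltnW.
  have : (Q ^ e <= Q * Q ^ e)%N by rewrite leq_pmull // ltnW.
  rewrite mulnBr muln1 (mulnC (Q ^ e)%N); lia.
have hPu : (Psi b Q * u' = b * k')%N.
  apply/eqP; rewrite -(eqn_pmul2r hc) -mulnA hu geo -hM subn1 -hk; apply/eqP.
  by rewrite mulnCA mulnA.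
set S := (\sum_(s < b) #|Aset A p c (alpha s)|)%N.
have sumA : (\sum_(s < b) nbC p u' (alpha s) = b * (1 + p) + u' * p * S)%N.
  rewrite (eq_bigr _ (fun s _ => NA s)) big_split /= sum_nat_const card_ord.
  by rewrite /S big_distrr.
have Hn : (b * (1 + p + k' * p * #|Aset M p n beta|) + b * ((p + 1) * Q * X) =
           Psi b Q * \sum_(s < b) nbC p u' (alpha s))%N.
  rewrite sumA hS -/S; rewrite PsiE in hPu *.
  have -> : ((1 + Q * X) * (b * (1 + p) + u' * p * S) =
     (1 + Q * X) * (b * (1 + p)) + ((1 + Q * X) * u') * p * S)%N by ring.
  rewrite hPu; ring.
rewrite /rhsQ -/X.
have b0 : (b%:R != 0 :> rat) by rewrite Num.Theory.pnatr_eq0 -lt0n s0.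
under eq_bigr do rewrite -pmulrn.
rewrite -!pmulrn -natr_sum mulrAC -natrM -Hn natrD !natrM mulrDl.
rewrite !(mulrC b%:R) !mulfK // addrK.
by [].
Qed.

Lemma final_fwd k' u' (beta : M) : (k' * n = #|M|.-1)%N -> (u' * c = Q - 1)%N ->
  exists alpha : 'I_b -> A, (nbC p k' beta)%:Q = rhsQ u' alpha.
Proof.
move=> hk hu; exists (fun s => tau (beta * zeta ^+ s)).
by apply: arith => //; apply: count_main.
Qed.

Lemma final_conv k' u' (alpha : 'I_b -> A) : (k' * n = #|M|.-1)%N -> (u' * c = Q - 1)%N ->
  exists beta : M, (nbC p k' beta)%:Q = rhsQ u' alpha.
Proof.
move=> hk hu; have [beta hbeta] := converse alpha; exists beta.
apply: arith => //; rewrite count_main; apply: eq_bigr => s _; by rewrite hbeta.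
Qed.

End Roots.
End Main.


Lemma fixN (R : nzRingType) (x : R) N e : x ^+ N = x -> x ^+ (N ^ e) = x.
Proof.
move=> xN; elim: e => [|e IH]; first by rewrite expn0 expr1.
by rewrite expnSr exprM IH.
Qed.

Theorem corollary6p2 (p a b c : nat)
  (Fm Fa : finFieldType)
  (hp : prime p) (ha : (0 < a)%N) (hb : (1 < b)%N) (hc : (0 < c)%N)
  (hcdvd : (c %| p ^ a - 1)%N)
  (hcprim : primitive_divisor c p a)
  (hpc : (p - 1 %| c)%N)
  (hn : primitive_divisor (b * c) p (a * b))
  (hFm : #|Fm| = (p ^ (a * b))%N)
  (hFa : #|Fa| = (p ^ a)%N) :
  let m := (a * b)%N in
  let n := (b * c)%N in
  let u := ((p ^ a - 1) %/ c)%N in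
  let k := ((p ^ m - 1) %/ n)%N in
  let rhs := fun alpha : 'I_b -> Fa =>
    (Psi b (p ^ a)%N)%:Q / b%:Q * (\sum_(i < b) (nbC p u (alpha i))%:Q)
    - ((p + 1) * p ^ a * Psi b.-1 (p ^ a))%N%:Q in
  (forall beta : Fm, exists alpha : 'I_b -> Fa, (nbC p k beta)%:Q = rhs alpha) /\
  (forall alpha : 'I_b -> Fa, exists beta : Fm, (nbC p k beta)%:Q = rhs alpha).
Proof.
move=> m n u k rhs.
have pm : p \in [pchar Fm] := card_finPcharP hFm hp.
have pa : p \in [pchar Fa] := card_finPcharP hFa hp.
have hM : #|Fm| = ((p ^ a) ^ b)%N by rewrite hFm expnM.
have hAM : forall x : Fa, x ^+ #|Fm| = x.
  by move=> x; rewrite hM; apply: fixN; rewrite -hFa; exact: expf_card.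
have [phi [pD pM p1 pinj ponto]] := @embed_exists Fa Fm p pa pm hAM.
have [w pw] := @prim_exists Fm p pm.
have hk : (k * (b * c) = #|Fm|.-1)%N.
  by rewrite /k /n /m hFm -subn1 divnK //; case: hn.
have hu : (u * c = p ^ a - 1)%N by rewrite /u divnK.
split.
- move=> beta.
  have [alpha H] := @final_fwd Fa Fm p a b c pa pm ha hb hc hFa hM hcdvd hn phi pD pM p1 pinj ponto w pw k u beta hk hu.
  by exists alpha; exact: H.
- move=> alpha.
  have [beta H] := @final_conv Fa Fm p a b c pa pm ha hb hc hFa hM hcdvd hn phi pD pM p1 pinj ponto w pw k u alpha hk hu.
  by exists beta; exact: H.
Qed.
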